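(* For every graph $G$ with at least one edge, $wr(G)\le sr(G)\le \lceil (\Delta(G)+1)/2\rceil$, where $\Delta(G)$ is the maximum degree of $G$.
   Context: All graphs are finite, simple and undirected. For a set $E'$ of edges of a graph, the subgraph induced by $E'$ is the graph whose edge set is $E'$ and whose vertex set is the set of endpoints of edges in $E'$. A graph is weakly semiregular if there are two numbers $a,b$ (not necessarily distinct) such that the degree of every vertex is $a$ or $b$; $wr(G)$ is the minimum number of subsets into which $E(G)$ can be partitioned so that the subgraph induced by each subset is weakly semiregular. A graph is semiregular if there is an integer $d$ such that every vertex has degree $d$ or $d+1$; $sr(G)$ is the minimum number of subsets into which $E(G)$ can be partitioned so that the subgraph induced by each subset is semiregular. *)

(* Defs.v *)
(* A finite simple undirected graph is a symmetric,
   irreflexive relation g : rel T on a finite vertex type T. *)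
From mathcomp Require Import all_boot.
Set Implicit Arguments. Unset Strict Implicit. Unset Printing Implicit Defensive.

Section Graph.
Variables (T : finType) (g : rel T).

Definition deg (v : T) : nat := #|[set w | g v w]|.

Definition maxdeg : nat := \max_(v : T) deg v.

Definition edges : {set {set T}} :=
  [set A : {set T} | [exists x, exists y, g x y && (A == [set x; y])]].

(* A partition of E(G) into k (possibly empty) classes, given by a colouring
   c of edges with colours in 'I_k; class i is [set A in edges | c A == i]. *)
Definition cdeg k (c : {ffun {set T} -> 'I_k}) (i : 'I_k) (v : T) : nat :=
  #|[set A in edges | (c A == i) && (v \in A)]|.

(* The vertices of the induced subgraph are those with cdeg > 0.
   Weakly semiregular: all its degrees lie in {a, b}.  (All degrees are
   <= #|T|, so quantifying over 'I_#|T|.+1 loses nothing.) *)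
Definition class_wsr k (c : {ffun {set T} -> 'I_k}) (i : 'I_k) : bool :=
  [exists a : 'I_#|T|.+1, exists b : 'I_#|T|.+1,
     [forall v, (0 < cdeg c i v) ==>
                ((cdeg c i v == a) || (cdeg c i v == b))]].

Definition class_sr k (c : {ffun {set T} -> 'I_k}) (i : 'I_k) : bool :=
  [exists d : 'I_#|T|.+1,
     [forall v, (0 < cdeg c i v) ==>
                ((cdeg c i v == d) || (cdeg c i v == d.+1))]].

Definition wr_part (k : nat) : bool :=
  [exists c : {ffun {set T} -> 'I_k}, [forall i, class_wsr c i]].

Definition sr_part (k : nat) : bool :=
  [exists c : {ffun {set T} -> 'I_k}, [forall i, class_sr c i]].

(* least k admitting such a partition; k = #|edges| always works
   (one edge per class), so searching in 0..#|edges| finds the minimum. *)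
Definition wr : nat := find wr_part (iota 0 #|edges|.+1).
Definition sr : nat := find sr_part (iota 0 #|edges|.+1).

End Graph.

(* Main.v *)
Require Import Defs.
From mathcomp Require Import all_boot zify.
Set Implicit Arguments. Unset Strict Implicit. Unset Printing Implicit Defensive.


Section Core.
Variables (T : finType) (k : nat).
Implicit Types (col : T -> T -> option 'I_k).

Definition outs col x d := [set y | col x y == Some d].
Definition ins col x d := [set y | col y x == Some d].
Definition cinv (h : rel T) col : Prop :=
  [/\ forall x y, col x y != None -> h x y,
      forall x y, col x y != None -> col y x = None,
      forall x y, h x y -> (col x y != None) || (col y x != None)
    & forall x d, #|outs col x d| <= 1 /\ #|ins col x d| <= 1].

Lemma pick1 (U : finType) (A : {set U}) y : #|A| <= 1 -> y \in A -> [pick z in A] = Some y.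
Proof.
move=> c1 yA; case: pickP => [z zA|/(_ y)]; last by rewrite yA.
by move/card_le1_eqP: c1 => /(_ z y zA yA) ->.
Qed.

Lemma card1_eq (U : finType) (A : {set U}) y z : #|A| <= 1 -> y \in A -> z \in A -> y = z.
Proof. by move/card_le1_eqP => H yA zA; apply: H. Qed.

Lemma fconnect_step (U : finType) (f : U -> U) x y :
  fconnect f x y -> x != y -> fconnect f (f x) y.
Proof.
move=> /iter_findex; set n := findex f x y => <-.
case: n => [|n]; first by rewrite eqxx.
by rewrite iterSr => _; apply: fconnect_iter.
Qed.

Lemma fconnect_eq (U : finType) (f : U -> U) a b t :
  f a = b -> a != t -> fconnect f a t = fconnect f b t.
Proof.
move=> fab at'; apply/idP/idP => H.
  by rewrite -fab; apply: fconnect_step.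
by apply: connect_trans H; rewrite -fab; apply: fconnect1.
Qed.

Lemma fconnect_fix (U : finType) (f : U -> U) a t : f a = a -> fconnect f a t -> t = a.
Proof. by move=> fa /iter_findex <-; apply: iter_fix. Qed.

Section Rev.
Variables (h : rel T) (hsym : symmetric h) (col : T -> T -> option 'I_k)
  (Hinv : cinv h col) (u : T) (gam : 'I_k) (Hu : ins col u gam = set0).

Let Hout x d : #|outs col x d| <= 1. Proof. by case: Hinv => _ _ _ /(_ x d) []. Qed.
Let Hin x d : #|ins col x d| <= 1. Proof. by case: Hinv => _ _ _ /(_ x d) []. Qed.
Let Hanti x y : col x y != None -> col y x = None. Proof. by case: Hinv => _ H _ _; apply: H. Qed.

Definition rf x := if [pick y in outs col x gam] is Some y then y else x.
Definition rO := [set x | fconnect rf u x].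

Lemma rf_arc x y : col x y = Some gam -> rf x = y.
Proof. by move=> e; rewrite /rf (@pick1 _ _ y) // inE e. Qed.

Lemma rf_case x : (exists2 y, col x y = Some gam & rf x = y) \/ rf x = x.
Proof.
rewrite /rf; case: pickP => [y|_]; last by right.
by rewrite inE => /eqP e; left; exists y.
Qed.

Lemma rdesc n : forall x y, iter n rf u = y -> col x y = Some gam -> x \in rO.
Proof.
elim: n => [|n IH] x y /=.
  move=> <- e; have : x \in ins col u gam by rewrite inE e.
  by rewrite Hu in_set0.
move=> ey e; case: (rf_case (iter n rf u)) => [[w ew fw]|fz].
  have ey' : col (iter n rf u) y = Some gam by rewrite -ey fw.
  have -> : x = iter n rf u.
    apply: (@card1_eq _ (ins col y gam)); [exact: Hin|by rewrite inE e|by rewrite inE ey'].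
  by rewrite inE fconnect_iter.
by apply: (IH x y) => //; rewrite -ey fz.
Qed.

Lemma rhasin n : forall y, iter n rf u = y -> y = u \/ exists x, col x y = Some gam.
Proof.
elim: n => [|n IH] y /=; first by left.
case: (rf_case (iter n rf u)) => [[w ew fw]|fz] ey.
  by right; exists (iter n rf u); rewrite -ey fw.
by apply: IH; rewrite -ey fz.
Qed.

Lemma rclos x y : col x y = Some gam -> (x \in rO) = (y \in rO).
Proof.
move=> e; apply/idP/idP; rewrite !inE => H.
  by apply: connect_trans H _; rewrite -(rf_arc e); apply: fconnect1.
by have := rdesc (iter_findex H) e; rewrite inE.
Qed.

Definition rcol a b :=
  if (b \in rO) && (col b a == Some gam) then Some gam
  else if (a \in rO) && (col a b == Some gam) then None else col a b.

Lemma routs z d : outs rcol z d = if (d == gam) && (z \in rO) then ins col z gam else outs col z d.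
Proof.
apply/setP => y.
case: (boolP ((d == gam) && (z \in rO))) => [/andP[/eqP-> zO]|C]; rewrite !inE /rcol.
  case: ifP => [/andP[yO /eqP e]|A]; first by rewrite e eqxx.
  case: ifP => [/andP[_ /eqP e]|B]; first by rewrite Hanti ?e.
  rewrite zO /= in B; rewrite B; apply/esym/eqP => e.
  by move: A; rewrite (rclos e) zO e eqxx.
case: ifP => [/andP[yO /eqP e]|A].
  have zO : z \in rO by rewrite -(rclos e).
  rewrite Hanti ?e //; apply/eqP => -[gd]; by rewrite gd eqxx zO in C.
case: ifP => [/andP[zO /eqP e]|B] //.
rewrite e; apply/esym/eqP => -[gd]; by rewrite gd eqxx zO in C.
Qed.

Lemma rins z d : ins rcol z d = if (d == gam) && (z \in rO) then outs col z gam else ins col z d.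
Proof.
apply/setP => y.
case: (boolP ((d == gam) && (z \in rO))) => [/andP[/eqP-> zO]|C]; rewrite !inE /rcol.
  case: ifP => [/andP[_ /eqP e]|A]; first by rewrite e eqxx.
  case: ifP => [/andP[yO /eqP e]|B]; first by rewrite Hanti ?e.
  rewrite zO /= in A; rewrite A; apply/eqP => e.
  by move: B; rewrite (rclos e) zO e eqxx.
case: ifP => [/andP[zO /eqP e]|A].
  rewrite Hanti ?e //; apply/eqP => -[gd]; by rewrite gd eqxx zO in C.
case: ifP => [/andP[yO /eqP e]|B] //.
have zO : z \in rO by rewrite -(rclos e).
rewrite e; apply/esym/eqP => -[gd]; by rewrite gd eqxx zO in C.
Qed.

Lemma rcov x y : col x y != None -> (rcol x y != None) || (rcol y x != None).
Proof.
move=> nn; rewrite {1}/rcol.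
case: ifP => [_|A] //.
case: ifP => [/andP[xO /eqP e]|B]; last by rewrite nn.
by rewrite /= /rcol xO e eqxx.
Qed.

Lemma rev_inv : cinv h rcol.
Proof.
case: Hinv => Hs Ha Hc Hn; split.
- move=> x y; rewrite /rcol; case: ifP => [/andP[_ /eqP e] _|A].
    by rewrite hsym; apply: Hs; rewrite e.
  by case: ifP => // B /Hs.
- move=> x y; rewrite {1}/rcol; case: ifP => [/andP[yO /eqP e] _|A].
    by rewrite /rcol (Hanti (x:=y)) ?e //= andbF yO eqxx.
  case: ifP => // B nn; rewrite /rcol B A.
  by apply: Hanti.
- move=> x y /Hc /orP[/rcov//|/rcov]; by rewrite orbC.
- move=> x d; rewrite routs rins; case: ifP => _; split; [exact: Hin|exact: Hout|exact: Hout|exact: Hin].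
Qed.

Lemma rev_u : outs rcol u gam = set0.
Proof. by rewrite routs eqxx inE connect0. Qed.

Lemma rev_other w d : w != u -> ins col w d = set0 -> ins rcol w d = set0.
Proof.
move=> wu e; rewrite rins; case: ifP => // /andP[/eqP dg wO].
subst d; move: wO; rewrite inE => /iter_findex /rhasin [wu'|[x ex]].
  by rewrite wu' eqxx in wu.
have : x \in ins col w gam by rewrite inE ex.
by rewrite e inE.
Qed.

End Rev.

Section Kempe.
Variables (h : rel T) (col : T -> T -> option 'I_k)
  (Hinv : cinv h col) (u v : T) (al be : 'I_k)
  (Hu : outs col u al = set0) (Hv : ins col v be = set0).

Let Hout x d : #|outs col x d| <= 1. Proof. by case: Hinv => _ _ _ /(_ x d) [H _]. Qed.
Let Hin x d : #|ins col x d| <= 1. Proof. by case: Hinv => _ _ _ /(_ x d) [_ H]. Qed.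

Definition kF (n : T * bool) : T * bool :=
  let: (x, b) := n in
  if b then (if [pick y in outs col x al] is Some y then (y, false) else (x, true))
  else (if [pick y in ins col x be] is Some y then (y, true) else (x, false)).

Definition kS := [set n | fconnect kF n (v, false)].

Definition swp (d : 'I_k) := if d == al then be else if d == be then al else d.

Lemma swpK d : swp (swp d) = d.
Proof.
rewrite /swp.
have [da|da] := eqVneq d al; have [db|db] := eqVneq d be; have [ab|ab] := eqVneq al be;
  subst => //; rewrite ?eqxx ?(negbTE da) ?(negbTE db) ?(negbTE ab) //=;
  try by rewrite eq_sym (negbTE ab).
all: try by rewrite ?eqxx.
Qed.

Lemma swp_inj : injective swp.
Proof. exact: can_inj swpK. Qed.

Definition kcol x y := if (x, true) \in kS then omap swp (col x y) else col x y.

Lemma kF_al x y : col x y = Some al -> kF (x, true) = (y, false).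
Proof. by move=> e; rewrite /= (@pick1 _ _ y) // inE e. Qed.

Lemma kF_be x y : col x y = Some be -> kF (y, false) = (x, true).
Proof. by move=> e; rewrite /= (@pick1 _ _ x) // inE e. Qed.

Lemma kclos x y : (col x y == Some al) || (col x y == Some be) ->
  ((x, true) \in kS) = ((y, false) \in kS).
Proof.
rewrite !inE => /orP[/eqP e|/eqP e].
  by apply: (fconnect_eq (kF_al e)); rewrite xpair_eqE andbF.
symmetry; apply: fconnect_eq; first exact: kF_be e.
apply/eqP => -[yv]; subst y.
have : x \in ins col v be by rewrite inE e.
by rewrite Hv in_set0.
Qed.

Lemma omap_swp (o : option 'I_k) d : (omap swp o == Some d) = (o == Some (swp d)).
Proof.
case: o => [c|] //=; apply/eqP/eqP => [[<-]|[->]]; by rewrite ?swpK.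
Qed.

Lemma swp_other (o : option 'I_k) d : ~~ ((o == Some al) || (o == Some be)) ->
  (o == Some (swp d)) = (o == Some d).
Proof.
case: o => [c|] //= H.
have sc : swp c = c.
  rewrite /swp; case: (eqVneq c al) => [ca|ca]; first by rewrite ca eqxx in H.
  case: (eqVneq c be) => [cb|cb] //; by rewrite cb eqxx orbT in H.
apply/eqP/eqP => [[e]|[e]].
  by rewrite -sc e swpK.
by rewrite -e sc.
Qed.

Lemma kouts z d : outs kcol z d = if (z, true) \in kS then outs col z (swp d) else outs col z d.
Proof.
by apply/setP => y; rewrite [in LHS]inE /kcol; case: ((z, true) \in kS); rewrite inE ?omap_swp.
Qed.

Lemma kins z d : ins kcol z d = if (z, false) \in kS then ins col z (swp d) else ins col z d.
Proof.
apply/setP => y; rewrite /ins [in LHS]inE /kcol.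
case: (boolP ((col y z == Some al) || (col y z == Some be))) => [H|H].
  by rewrite (kclos H); case: ((z, false) \in kS); rewrite !inE ?omap_swp.
by case: ((y, true) \in kS); case: ((z, false) \in kS); rewrite !inE ?omap_swp ?swp_other.
Qed.

Lemma knone x y : (kcol x y != None) = (col x y != None).
Proof. by rewrite /kcol; case: ifP => //; case: (col x y). Qed.

Lemma kempe_inv : cinv h kcol.
Proof.
case: Hinv => Hs Ha Hc Hn; split.
- by move=> x y; rewrite knone; apply: Hs.
- move=> x y; rewrite knone => /Ha e; rewrite /kcol e; by case: ifP.
- by move=> x y /Hc; rewrite !knone.
- move=> x d; rewrite kouts kins; split; case: ifP => _; [exact: Hout|exact: Hout|exact: Hin|exact: Hin].
Qed.

Lemma kempe_u : outs kcol u al = set0.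
Proof.
rewrite kouts; case: ifP => // uS.
have fx : kF (u, true) = (u, true).
  by rewrite /=; case: pickP => // y; rewrite Hu inE.
by move: uS; rewrite inE => /(fconnect_fix fx).
Qed.

Lemma kempe_v : ins kcol v al = set0.
Proof.
by rewrite kins inE connect0 /swp eqxx.
Qed.

End Kempe.

Section Ext.
Variables (h' h : rel T) (h'sym : symmetric h').

Lemma inv_T col : cinv h' col -> cinv h' (fun x y => col y x).
Proof.
case=> Hs Ha Hc Hn; split.
- by move=> x y /Hs; rewrite h'sym.
- by move=> x y /Ha.
- by move=> x y; rewrite h'sym => /Hc; rewrite orbC.
- by move=> x d; case: (Hn x d) => a b; split.
Qed.

Lemma pickS (U : finType) (A : {set U}) : A != set0 -> exists2 y, [pick z in A] = Some y & y \in A.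
Proof.
case/set0Pn => y yA; case: pickP => [z zA|/(_ y)]; last by rewrite yA.
by exists z.
Qed.

Lemma deg_count col x : cinv h' col -> (forall d, outs col x d != set0) ->
  (forall d, ins col x d != set0) -> 2 * k <= #|[set y | h' x y]|.
Proof.
case=> Hs Ha Hc Hn Ho Hi.
pose phi (p : 'I_k * bool) := odflt x [pick y in if p.2 then outs col x p.1 else ins col x p.1].
have phiP p : if p.2 then col x (phi p) = Some p.1 else col (phi p) x = Some p.1.
  rewrite /phi; case: p => d [] /=.
    by case: (pickS (Ho d)) => y -> /=; rewrite inE => /eqP.
  by case: (pickS (Hi d)) => y -> /=; rewrite inE => /eqP.
have inj : injective phi.
  move=> [d1 b1] [d2 b2] e; have P1 := phiP (d1, b1); have P2 := phiP (d2, b2).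
  rewrite -e in P2; clear e; move: P1 P2 => /=; move: (phi (d1, b1)) => y.
  case: b1; case: b2 => /= e1 e2.
  - by move: e1; rewrite e2 => -[->].
  - by move: (Ha x y); rewrite e1 e2 => /(_ isT).
  - by move: (Ha x y); rewrite e1 e2 => /(_ isT).
  - by move: e1; rewrite e2 => -[->].
have : #|[set phi p | p in [set: 'I_k * bool]]| <= #|[set y | h' x y]|.
  apply: subset_leq_card; apply/subsetP => y /imsetP [p _ ->]; rewrite inE.
  have := phiP p; case: p.2 => e.
    by apply: Hs; rewrite e.
  by rewrite h'sym; apply: Hs; rewrite e.
rewrite card_in_imset; last by move=> p q _ _; apply: inj.
by rewrite cardsT card_prod card_ord card_bool mulnC.
Qed.

Variables (u v : T) (al : 'I_k) (nh : ~~ h' u v) (uv : u != v)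
  (hdef : forall x y, h x y = h' x y || ((x == u) && (y == v)) || ((x == v) && (y == u))).

Definition acol col x y := if (x == u) && (y == v) then Some al else col x y.

Lemma add_inv col : cinv h' col -> outs col u al = set0 -> ins col v al = set0 -> cinv h (acol col).
Proof.
case=> Hs Ha Hc Hn Hu Hv.
have nh' : ~~ h' v u by rewrite h'sym.
have anone x y : col x y != None -> acol col x y != None.
  by rewrite /acol; case: ifP.
split.
- move=> x y; rewrite /acol hdef; case: ifP => [/andP[/eqP-> /eqP->] _|_ /Hs ->]; by rewrite ?eqxx ?orbT.
- move=> x y; rewrite /acol; case: ifP => [/andP[/eqP-> /eqP->] _|A].
    rewrite eq_sym (negbTE uv) /=.
    by case E: (col v u) => [c|] //; move: nh'; rewrite Hs // E.
  move=> nn; case: ifP => [/andP[/eqP yu /eqP xv]|_]; last by apply: Ha.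
  by move: (Hs _ _ nn) nh; rewrite xv yu h'sym => ->.
- move=> x y; rewrite hdef => /orP[/orP[/Hc /orP[/anone->//|/anone->]|]|]; rewrite ?orbT //.
    by move=> /andP[/eqP-> /eqP->]; rewrite /acol !eqxx.
  by move=> /andP[/eqP-> /eqP->]; rewrite /acol !eqxx orbT.
- move=> x d; split.
    have : outs (acol col) x d \subset (if (x == u) && (d == al) then [set v] else outs col x d).
      apply/subsetP => y; rewrite !inE /acol; case: ifP => [/andP[/eqP-> /eqP->] /eqP[<-]|A e].
        by rewrite !eqxx inE.
      case: ifP => [/andP[/eqP xu /eqP da]|_]; last by rewrite inE.
      have : y \in outs col u al by rewrite inE -xu -da.
      by rewrite Hu in_set0.
    move/subset_leq_card/leq_trans; apply; case: ifP => _; first by rewrite cards1.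
    by case: (Hn x d).
  have : ins (acol col) x d \subset (if (x == v) && (d == al) then [set u] else ins col x d).
    apply/subsetP => y; rewrite !inE /acol; case: ifP => [/andP[/eqP-> /eqP->] /eqP[<-]|A e].
      by rewrite !eqxx inE.
    case: ifP => [/andP[/eqP xv /eqP da]|_]; last by rewrite inE.
    have : y \in ins col v al by rewrite inE -xv -da.
    by rewrite Hv in_set0.
  move/subset_leq_card/leq_trans; apply; case: ifP => _; first by rewrite cards1.
  by case: (Hn x d).
Qed.

End Ext.
End Core.


Section Ext2.
Variables (T : finType) (k : nat) (h' h : rel T) (h'sym : symmetric h').

Lemma S1 u v (nh : ~~ h' u v) (uv : u != v)
  (hdef : forall x y, h x y = h' x y || ((x == u) && (y == v)) || ((x == v) && (y == u)))
  (col : T -> T -> option 'I_k) (a b : 'I_k) :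
  cinv h' col -> outs col u a = set0 -> ins col v b = set0 -> exists col' : T -> T -> option 'I_k, cinv h col'.
Proof.
move=> Hi Hu Hv.
exists (acol u v a (kcol col v a b)).
apply: (add_inv h'sym nh uv hdef (kempe_inv Hi Hu Hv)); [exact: kempe_u|]. by have := kempe_v Hi Hu Hv; apply.
Qed.

Lemma ex_empty (col : T -> T -> option 'I_k) x : cinv h' col -> #|[set y | h' x y]| < 2 * k ->
  (forall d, outs col x d != set0) -> exists d, ins col x d = set0.
Proof.
move=> Hi dg Ho; case: (boolP [exists d, ins col x d == set0]) => [/existsP[d /eqP e]|ne].
  by exists d.
have := deg_count h'sym Hi Ho; rewrite leqNgt dg => /(_ _) //.
move=> H; suff: false by [].
apply: H => d; apply: contra ne => e; apply/existsP; by exists d.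
Qed.

Variables (u v : T) (nh : ~~ h' u v) (uv : u != v)
  (hdef : forall x y, h x y = h' x y || ((x == u) && (y == v)) || ((x == v) && (y == u)))
  (du : #|[set y | h' u y]| < 2 * k) (dv : #|[set y | h' v y]| < 2 * k).

Lemma S2 (col : T -> T -> option 'I_k) : cinv h' col ->
  (forall d, outs col u d != set0) -> (forall d, outs col v d != set0) -> exists col' : T -> T -> option 'I_k, cinv h col'.
Proof.
move=> Hi Ou Ov.
have [g Ig] := ex_empty Hi du Ou.
have [b Ib] := ex_empty Hi dv Ov.
apply: (@S1 u v nh uv hdef (rcol col u g) g b).
- exact: rev_inv.
- by have := rev_u Hi Ig; apply.
- apply: (rev_other Hi Ig); last by have := Ib; apply.
  by apply/negP => /eqP e; move: uv; rewrite e eqxx.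
Qed.

Lemma S3 (col : T -> T -> option 'I_k) : cinv h' col ->
  (forall d, ins col u d != set0) -> (forall d, ins col v d != set0) -> exists col' : T -> T -> option 'I_k, cinv h col'.
Proof.
move=> Hi Iu Iv.
exact: (S2 (inv_T h'sym Hi) Iu Iv).
Qed.

Lemma nex (P : 'I_k -> {set T}) : [exists d, P d == set0] = false -> forall d, P d != set0.
Proof. by move=> e d; apply/eqP => H; move/negbT: e => /existsPn /(_ d); rewrite H eqxx. Qed.

Lemma yex (P : 'I_k -> {set T}) : [exists d, P d == set0] = true -> exists d, P d = set0.
Proof. by move/existsP => [d /eqP]; exists d. Qed.

Lemma extend (col : T -> T -> option 'I_k) : cinv h' col -> exists col' : T -> T -> option 'I_k, cinv h col'.
Proof.
move=> Hi.
have nh2 : ~~ h' v u by rewrite h'sym.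
have vu : v != u by apply/negP => /eqP e; move: uv; rewrite e eqxx.
have hdef2 : forall x y, h x y = h' x y || ((x == v) && (y == u)) || ((x == u) && (y == v)).
  by move=> x y; rewrite hdef -!orbA [X in _ || X]orbC.
have AB x : #|[set y | h' x y]| < 2 * k ->
    [exists d, outs col x d == set0] = false -> [exists d, ins col x d == set0] = true.
  move=> dx no; apply/existsP; have [d Id] := ex_empty Hi dx (nex no).
  by exists d; rewrite Id.
case Au: [exists d, outs col u d == set0]; case Bv: [exists d, ins col v d == set0].
- by have [a Ha] := yex Au; have [b Hb] := yex Bv; exact: (S1 nh uv hdef Hi Ha Hb).
- have Av : [exists d, outs col v d == set0] = true.
    by case E: [exists d, outs col v d == set0]; rewrite // (AB v dv E) in Bv.
  case Bu: [exists d, ins col u d == set0].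
  + by have [a Ha] := yex Av; have [b Hb] := yex Bu; exact: (S1 nh2 vu hdef2 Hi Ha Hb).
  + exact: (S3 Hi (nex Bu) (nex Bv)).
- have Bu := AB u du Au; case Av: [exists d, outs col v d == set0].
  + by have [a Ha] := yex Av; have [b Hb] := yex Bu; exact: (S1 nh2 vu hdef2 Hi Ha Hb).
  + exact: (S2 Hi (nex Au) (nex Av)).
- have Bu := AB u du Au.
  have Av : [exists d, outs col v d == set0] = true.
    by case E: [exists d, outs col v d == set0]; rewrite // (AB v dv E) in Bv.
  by have [a Ha] := yex Av; have [b Hb] := yex Bu; exact: (S1 nh2 vu hdef2 Hi Ha Hb).
Qed.

End Ext2.


Section Build.
Variables (T : finType) (k : nat) (g : rel T) (gsym : symmetric g) (girr : irreflexive g)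
  (Hdeg : forall x, #|[set y | g x y]| <= 2 * k).

Lemma empty_ok (h : rel T) : (forall p : T * T, h p.1 p.2 = false) ->
  exists col : T -> T -> option 'I_k, cinv h col.
Proof.
move=> none; exists (fun _ _ => None); split => //.
- by move=> x y; rewrite (none (x, y)).
- move=> x d; have -> : outs (fun _ _ : T => None) x d = set0 by apply/setP => y; rewrite !inE.
  have -> : ins (fun _ _ : T => None) x d = set0 by apply/setP => y; rewrite !inE.
  by rewrite cards0.
Qed.

Lemma build n : forall h : rel T, symmetric h -> (forall x y, h x y -> g x y) ->
  #|[set p : T * T | h p.1 p.2]| <= n -> exists col : T -> T -> option 'I_k, cinv h col.
Proof.
elim: n => [|n IH] h hsym hg hc;
  (case: (pickP [pred p : T * T | h p.1 p.2]) => [[u v] /= huv|none]; last exact: empty_ok).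
  have : 0 < #|[set p : T * T | h p.1 p.2]| by apply/card_gt0P; exists (u, v); rewrite inE.
  by move=> pos; move: (leq_trans pos hc).
pose c x y := ((x == u) && (y == v)) || ((x == v) && (y == u)).
pose h' x y := h x y && ~~ c x y.
have h'sym : symmetric h'.
  by move=> x y; rewrite /h' /c (hsym x y) [X in _ = _ && ~~ X]orbC (andbC (y == u)) (andbC (y == v)).
have nh : ~~ h' u v by rewrite /h' /c !eqxx /= andbF.
have uv : u != v by apply/negP => /eqP e; move: (hg _ _ huv); rewrite e girr.
have hdef x y : h x y = h' x y || ((x == u) && (y == v)) || ((x == v) && (y == u)).
  rewrite /h' -orbA -/(c x y); case: (boolP (c x y)) => cxy; rewrite ?andbT ?orbT ?orbF //.
  by case/orP: cxy => /andP[/eqP-> /eqP->] //; rewrite hsym.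
have h'g x y : h' x y -> g x y by case/andP => /hg.
have card' : #|[set p : T * T | h' p.1 p.2]| <= n.
  rewrite -ltnS; apply: leq_trans hc; apply: proper_card; apply/properP; split.
    by apply/subsetP => p; rewrite !inE => /andP[].
  by exists (u, v); rewrite !inE //= /h' /c !eqxx /= andbF.
have [col Hcol] := IH h' h'sym h'g card'.
have degu : #|[set z | h' u z]| < 2 * k.
  apply: leq_trans (Hdeg u); apply: proper_card; apply/properP; split.
    by apply/subsetP => z; rewrite !inE => /h'g.
  by exists v; rewrite !inE // (hg _ _ huv).
have degv : #|[set z | h' v z]| < 2 * k.
  apply: leq_trans (Hdeg v); apply: proper_card; apply/properP; split.
    by apply/subsetP => z; rewrite !inE => /h'g.
  exists u; rewrite !inE; last by rewrite (h'sym v u).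
  by apply: hg; rewrite (hsym v u).
exact: (extend h'sym nh uv hdef degu degv Hcol).
Qed.
End Build.


Section Conv.
Variables (T : finType) (g : rel T) (gsym : symmetric g) (girr : irreflexive g).

Lemma L_edge (A : {set T}) v : A \in edges g -> v \in A -> exists2 w, g v w & A = [set v; w].
Proof.
rewrite inE => /existsP[x /existsP[y /andP[gxy /eqP ->]]].
rewrite !inE => /orP[/eqP->|/eqP->]; first by exists y.
by exists x; [rewrite gsym | rewrite setUC].
Qed.

Definition oth v (A : {set T}) := odflt v [pick w in A | w != v].

Lemma L_oth v w : w != v -> oth v [set v; w] = w.
Proof.
move=> wv; rewrite /oth; case: pickP => [z /andP[]|/(_ w)]; last by rewrite !inE eqxx orbT wv.
by rewrite !inE => /orP[/eqP->|/eqP->]; rewrite ?eqxx.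
Qed.

Lemma card_nbr (P : {set T} -> bool) v :
  #|[set A in edges g | P A && (v \in A)]| <= #|[set w | g v w && P [set v; w]]|.
Proof.
have key A : A \in [set A in edges g | P A && (v \in A)] ->
    g v (oth v A) /\ A = [set v; oth v A].
  rewrite inE => /andP[Ae /andP[_ vA]]; have [w gw ->] := L_edge Ae vA.
  have wv : w != v by apply/negP => /eqP e; move: gw; rewrite e girr.
  by rewrite L_oth.
rewrite -(card_in_imset (f := oth v)); last first.
  move=> A B /key [_ eA] /key [_ eB] e; by rewrite eA eB e.
apply: subset_leq_card; apply/subsetP => w /imsetP [A AS ->].
have [gw eA] := key A AS; move: AS; rewrite !inE gw /= => /andP[_ /andP[PA _]].
by rewrite -eA.
Qed.

Lemma cdeg_le k (c : {ffun {set T} -> 'I_k}) i v : cdeg g c i v <= #|T|.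
Proof. by apply: leq_trans (card_nbr _ _) (max_card _). Qed.

Lemma sr_wr k (c : {ffun {set T} -> 'I_k}) i : class_sr g c i -> class_wsr g c i.
Proof.
case/existsP => d /forallP H; apply/existsP; exists d; apply/existsP.
exists (inord d.+1); apply/forallP => v; apply/implyP => pos.
move/implyP: (H v) => /(_ pos) /orP[->//|/eqP e].
have le := cdeg_le c i v; rewrite e in le.
by rewrite e inordK ?eqxx ?orbT.
Qed.

End Conv.


Section Fin.
Variables (T : finType) (g : rel T) (gsym : symmetric g) (girr : irreflexive g).

Lemma set2_eq (a b c d : T) : [set a; b] = [set c; d] -> (a = c /\ b = d) \/ (a = d /\ b = c).
Proof.
move=> e.
have ha : a \in [set c; d] by rewrite -e !inE eqxx.
have hb : b \in [set c; d] by rewrite -e !inE eqxx orbT.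
have hc : c \in [set a; b] by rewrite e !inE eqxx.
have hd : d \in [set a; b] by rewrite e !inE eqxx orbT.
move: ha hb hc hd; rewrite !inE.
case/orP => /eqP ea; case/orP => /eqP eb hc hd; subst a b.
- by left; split => //; move: hd; rewrite orbb => /eqP.
- by left.
- by right.
- by right; split => //; move: hc; rewrite orbb => /eqP.
Qed.

Definition ccol k (col : T -> T -> option 'I_k) (A : {set T}) :=
  if [pick p : T * T | (A == [set p.1; p.2]) && (col p.1 p.2 != None)] is Some p
  then col p.1 p.2 else None.

Lemma ccol_spec k (col : T -> T -> option 'I_k) (i : 'I_k) v w :
  cinv g col -> g v w -> exists2 c, ccol col [set v; w] = Some c &
    (ccol col [set v; w] == Some i) ==> ((w \in outs col v i) || (w \in ins col v i)).
Proof.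
case=> Hs Ha Hc Hn gvw; rewrite /ccol; case: pickP => [[a b] /= /andP[/eqP e nn]|none].
  case E: (col a b) nn => [c|] // _; exists c => //; apply/implyP => /eqP [ci].
  case: (set2_eq e) => [[-> ->]|[-> ->]]; by rewrite !inE E ci eqxx ?orbT.
exfalso; move/Hc: gvw => /orP[nn|nn].
  by move: (none (v, w)); rewrite /= eqxx nn.
by move: (none (w, v)); rewrite /= setUC eqxx nn.
Qed.

Lemma sr_ok k (col : T -> T -> option 'I_k) (i0 : 'I_k) : cinv g col -> 0 < #|T| -> sr_part g k.
Proof.
move=> Hi T0; apply/existsP; exists [ffun A => odflt i0 (ccol col A)]; apply/forallP => i.
apply/existsP; exists (inord 1); apply/forallP => v; apply/implyP => pos.
have le2 : cdeg g [ffun A => odflt i0 (ccol col A)] i v <= 2.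
  apply: leq_trans (card_nbr gsym girr _ _) _.
  apply: (@leq_trans #|outs col v i :|: ins col v i|); last first.
    rewrite cardsU; apply: leq_trans (leq_subr _ _) _; case: Hi => _ _ _ /(_ v i) [a b].
    by rewrite -[2]/(1 + 1); apply: leq_add.
  apply: subset_leq_card; apply/subsetP => w; rewrite inE => /andP[gw].
  have [c e /implyP H] := ccol_spec i Hi gw.
  by rewrite ffunE e /= => ci; rewrite inE; apply: H; rewrite e.
rewrite inordK //; move: pos le2; case: (cdeg _ _ _ _) => [|[|[|n]]] //.
Qed.

End Fin.


Lemma find_le (P : pred nat) N i : i < N -> P i -> find P (iota 0 N) <= i.
Proof.
move=> iN Pi; rewrite leqNgt; apply/negP => /(before_find 0).
by rewrite nth_iota // add0n Pi.
Qed.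

Theorem theorem3 (T : finType) (g : rel T)
  (gsym : symmetric g) (girr : irreflexive g)
  (hedge : exists x y, g x y) :
  wr g <= sr g /\ sr g <= (maxdeg g + 2) %/ 2.
Proof.
have [x0 [y0 g0]] := hedge.
set k0 := (maxdeg g + 2) %/ 2.
have degmax x : deg g x <= maxdeg g by apply: (@leq_bigmax _ (deg g) x).
have Hdeg x : #|[set y | g x y]| <= 2 * k0.
  have := degmax x; rewrite /deg /k0; lia.
have [col Hcol] := @build T k0 g girr Hdeg _ g gsym (fun _ _ h => h) (leqnn _).
have k0pos : 0 < k0 by rewrite /k0; lia.
have T0 : 0 < #|T| by apply/card_gt0P; exists x0.
have srk0 : sr_part g k0 := sr_ok gsym girr (Ordinal k0pos) Hcol T0.
have k0E : k0 <= #|edges g|.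
  have [m em] := eq_bigmax (deg g) T0.
  have m1 : 0 < maxdeg g.
    apply: leq_trans (degmax x0); rewrite /deg; apply/card_gt0P; exists y0; by rewrite inE.
  have : deg g m <= #|edges g|.
    rewrite /deg -(card_in_imset (f := fun w => [set m; w])); last first.
      move=> w w'; rewrite !inE => gw gw' /set2_eq [[_ //]|[mw' wm]].
      by move: gw; rewrite wm girr.
    apply: subset_leq_card; apply/subsetP => A /imsetP [w]; rewrite inE => gw ->.
    by rewrite inE; apply/existsP; exists m; apply/existsP; exists w; rewrite gw eqxx.
  rewrite /maxdeg in em m1; rewrite /k0 /maxdeg em; rewrite em in m1; lia.
have srle : sr g <= k0 by apply: find_le => //; rewrite ltnS.
have hasr : has (sr_part g) (iota 0 #|edges g|.+1).
  by apply/hasP; exists k0 => //; rewrite mem_iota add0n ltnS.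
have srN : sr g < #|edges g|.+1 by rewrite /sr -{2}(size_iota 0 #|edges g|.+1) -has_find.
have srsr : sr_part g (sr g).
  by have := nth_find 0 hasr; rewrite -/(sr g) nth_iota // add0n.
split => //.
apply: find_le => //.
case/existsP: srsr => c /forallP H; apply/existsP; exists c; apply/forallP => i.
by have := sr_wr gsym girr (H i); apply.
Qed.
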